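(* Let $\mathbb{F}_2$ be the free group on two generators $x$ and $y$, and let $m,n$ be integers. Then the commutator $[x^m,y^n]=x^my^nx^{-m}y^{-n}$ is a product of two squares in $\mathbb{F}_2$ (i.e. $[x^m,y^n]=a^2b^2$ for some $a,b\in\mathbb{F}_2$) if and only if $mn$ is even.
   Context: For elements $g,h$ of a group, $[g,h]=ghg^{-1}h^{-1}$. *)

(* Defs.v *)
(* The free group F2 on generators x, y, realised as
   the set of freely reduced words, with product = concatenation followed
   by free reduction. *)
From HB Require Import structures.
From mathcomp Require Import all_boot all_order all_algebra.
Set Implicit Arguments. Unset Strict Implicit. Unset Printing Implicit Defensive.
Import Order.TTheory GRing.Theory Num.Theory.

(* A letter: (generator, inverted?) ; generator false = x, true = y. *)
Definition letter := (bool * bool)%type.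
Definition linv (a : letter) : letter := (a.1, ~~ a.2).

Definition reduced (w : seq letter) : bool :=
  sorted (fun a b : letter => b != linv a) w.

Definition cons_red (a : letter) (w : seq letter) : seq letter :=
  if w is b :: w' then (if b == linv a then w' else a :: w) else [:: a].

Lemma reduced_cons_red a w : reduced w -> reduced (cons_red a w).
Proof.
case: w => [//|b w] /=; case: ifP => [_ |/negbT nb].
  by case: w => //= c w /andP[].
by rewrite /reduced /= nb.
Qed.

Definition F2 := {w : seq letter | reduced w}.

Definition wmul (u v : seq letter) : seq letter := foldr cons_red v u.

Lemma reduced_wmul u v : reduced v -> reduced (wmul u v).
Proof. by elim: u => //= a u IH rv; apply: reduced_cons_red; apply: IH. Qed.

Definition F2mul (u v : F2) : F2 :=
  exist _ (wmul (proj1_sig u) (proj1_sig v)) (reduced_wmul _ (proj2_sig v)).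

Definition genpow (g : bool) (m : int) : seq letter := nseq `|m|%N (g, (m < 0)%R).

Lemma reduced_genpow g m : reduced (genpow g m).
Proof.
rewrite /reduced /genpow; set a := (g, _).
have ha : a != linv a by rewrite /linv /a xpair_eqE eqxx /=; case: (m < 0)%R.
elim: `|m|%N => //= k IH.
by case: k IH => //= k ->; rewrite ha.
Qed.

Definition F2pow (g : bool) (m : int) : F2 := exist _ (genpow g m) (reduced_genpow g m).
Definition F2x (m : int) : F2 := F2pow false m.
Definition F2y (m : int) : F2 := F2pow true m.

Definition comm_xy (m n : int) : F2 :=
  F2mul (F2x m) (F2mul (F2y n) (F2mul (F2x (- m)) (F2y (- n)))).

(* Main.v *)
Require Import Defs.
From mathcomp Require Import all_boot all_order all_algebra.
From mathcomp Require Import ring zify.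
Import GRing.Theory Num.Theory.
Local Open Scope ring_scope.

Lemma linvK (a : letter) : linv (linv a) = a.
Proof. by case: a => g b; rewrite /linv /= negbK. Qed.

Lemma cons_red_inv a w : reduced w -> cons_red a (cons_red (linv a) w) = w.
Proof.
case: w => [|b w] /=.
  by rewrite eqxx.
rewrite linvK; case: eqP => [-> |/eqP nb] /=.
  case: w => [//|c w] /=; rewrite /reduced /= => /andP[/negbTE -> _] //.
by rewrite eqxx.
Qed.

Lemma wmul_cons_red a u w : reduced w ->
  wmul (cons_red a u) w = cons_red a (wmul u w).
Proof.
move=> rw; case: u => [//|b u] /=.
case: eqP => [-> |_ //].
by rewrite cons_red_inv // reduced_wmul.
Qed.

Lemma wmulA u v w : reduced w -> wmul (wmul u v) w = wmul u (wmul v w).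
Proof.
move=> rw; elim: u => [//|a u IH] /=.
by rewrite wmul_cons_red // IH.
Qed.

Lemma F2mulA (a b c : F2) : F2mul (F2mul a b) c = F2mul a (F2mul b c).
Proof. apply: val_inj => /=; exact: wmulA (proj2_sig c). Qed.

Lemma genpowS g (i : int) : genpow g (i + 1) = cons_red (g, false) (genpow g i).
Proof.
case: i => [k|k].
  have -> : k%:Z + 1 = (k.+1)%:Z by rewrite -addn1 PoszD.
  rewrite /genpow /= !ltz_nat /=; case: k => [|k] /=; rewrite ?ltz_nat ?ltn0 //.
  by rewrite /linv /= xpair_eqE eqxx.
rewrite /genpow NegzE.
have -> : - (k.+1)%:Z + 1 = - (k%:Z) by rewrite -addn1 PoszD opprD addrK.
rewrite abszN absz_nat /= !oppr_lt0 !ltz_nat /= /linv /= eqxx.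
by case: k.
Qed.

Lemma genpowP g (i : int) : genpow g (i - 1) = cons_red (g, true) (genpow g i).
Proof.
have -> : (g, true) = linv (g, false) by [].
by rewrite -{2}(subrK 1 i) genpowS cons_red_inv // reduced_genpow.
Qed.

Lemma genpow_add g (i j : int) : wmul (genpow g i) (genpow g j) = genpow g (i + j).
Proof.
elim/int_rec: i => [|k IH|k IH]; first by rewrite add0r.
  rewrite -addn1 PoszD genpowS wmul_cons_red ?reduced_genpow // IH.
  by rewrite -genpowS addrAC.
rewrite -addn1 PoszD opprD genpowP wmul_cons_red ?reduced_genpow // IH.
by rewrite -genpowP addrAC.
Qed.

Lemma F2pow_add g (i j : int) : F2mul (F2pow g i) (F2pow g j) = F2pow g (i + j).
Proof. apply: val_inj => /=; exact: genpow_add. Qed.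

Lemma F2pow0 g (a : F2) : F2mul (F2pow g 0) a = a.
Proof. by apply: val_inj. Qed.

Lemma F2pow_addl g (i j : int) (a : F2) :
  F2mul (F2pow g i) (F2mul (F2pow g j) a) = F2mul (F2pow g (i + j)) a.
Proof. by rewrite -F2mulA F2pow_add. Qed.

Definition H := (int * int * int)%type.
Definition hmul (a b : H) : H :=
  (a.1.1 + b.1.1, a.1.2 + b.1.2, a.2 + b.2 + a.1.1 * b.1.2).
Definition lval (l : letter) : H :=
  let e : int := if l.2 then -1 else 1 in if l.1 then (0, e, 0) else (e, 0, 0).
Definition ev (w : seq letter) : H := foldr (fun l acc => hmul (lval l) acc) (0, 0, 0) w.

Lemma hmulA a b c : hmul (hmul a b) c = hmul a (hmul b c).
Proof.
case: a => [[a1 a2] a3]; case: b => [[b1 b2] b3]; case: c => [[c1 c2] c3].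
rewrite /hmul /=; congr (_, _, _); ring.
Qed.

Lemma ev_cons_red a w : ev (cons_red a w) = hmul (lval a) (ev w).
Proof.
case: w => [//|b w] /=; case: eqP => [-> |_ //].
rewrite -hmulA; case: (ev w) => [[x1 x2] x3].
case: a => [[] []]; rewrite /hmul /lval /=; congr (_, _, _); ring.
Qed.

Lemma ev_wmul u v : ev (wmul u v) = hmul (ev u) (ev v).
Proof.
elim: u => [|a u IH] /=.
  by case: (ev v) => [[x1 x2] x3]; rewrite /hmul /=; congr (_, _, _); ring.
by rewrite ev_cons_red IH hmulA.
Qed.

Lemma ev_genpow g (i : int) :
  ev (genpow g i) = if g then (0, i, 0) else (i, 0, 0).
Proof.
elim/int_rec: i => [|k IH|k IH]; first by case: g.
  rewrite -addn1 PoszD genpowS ev_cons_red IH.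
  by case: g IH => IH; rewrite /hmul /lval /=; congr (_, _, _); ring.
rewrite -addn1 PoszD opprD genpowP ev_cons_red IH.
by case: g IH => IH; rewrite /hmul /lval /=; congr (_, _, _); ring.
Qed.

Lemma ev_comm m n : ev (proj1_sig (comm_xy m n)) = (0, 0, m * n).
Proof.
rewrite /comm_xy /= !ev_wmul !ev_genpow /hmul /=; congr (_, _, _); ring.
Qed.

Theorem theorem1p1 (m n : int) :
  (exists a b : F2, comm_xy m n = F2mul a (F2mul a (F2mul b b)))
  <-> ~~ odd (absz (m * n)%R).
Proof.
split.
  move=> [a [b e]]; have := congr1 (fun z : F2 => ev (proj1_sig z)) e.
  rewrite ev_comm /= !ev_wmul.
  case: (ev (proj1_sig a)) => [[a1 a2] a3]; case: (ev (proj1_sig b)) => [[b1 b2] b3].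
  rewrite /hmul /= => -[e1 e2 e3].
  have hb1 : b1 = - a1 by lia.
  have hb2 : b2 = - a2 by lia.
  subst b1 b2.
  have -> : m * n = 2 * (a3 + b3 - a1 * a2) by rewrite e3; ring.
  by rewrite abszM oddM.
rewrite abszM oddM negb_and => /orP[hm|hn].
  have : (2 %| m)%Z by rewrite dvdzE /= dvdn2.
  case/dvdzP => k ->.
  exists (F2x k), (F2mul (F2y n) (F2mul (F2x (- k)) (F2y (- n)))).
  rewrite /comm_xy /F2x /F2y !F2mulA !F2pow_addl.
  rewrite addNr F2pow0 F2pow_addl.
  have -> : k * 2 = k + k by ring.
  by rewrite opprD.
have : (2 %| n)%Z by rewrite dvdzE /= dvdn2.
case/dvdzP => l ->.
exists (F2mul (F2x m) (F2mul (F2y l) (F2x (- m)))), (F2y (- l)).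
rewrite /comm_xy /F2x /F2y !F2mulA !F2pow_addl.
rewrite addNr F2pow0 F2pow_addl F2pow_add.
have -> : l * 2 = l + l by ring.
by rewrite opprD.
Qed.
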